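(* Let $(G,H)$ be a discrete Hecke pair which has a finite generating set $S$. If $(G,H)$ is of subexponential growth (with respect to a length function $l$ on $(G,H)$), then $(G,H)$ is relatively unimodular, i.e. $L(g)=R(g)$ for all $g\in G$.
   Context: A discrete Hecke pair is a group $G$ with a subgroup $H$ such that $L(x):=[H:H\cap xHx^{-1}]<\infty$ for all $x$; $R(x):=L(x^{-1})$; relatively unimodular means $L(g)/R(g)=1$ for all $g$. $S\subseteq G$ generates $(G,H)$ if $H\backslash G=\bigcup_nH\hat S^n$, $\hat S=S\cup S^{-1}\cup\{e\}$. A length function on $(G,H)$ is $l:G\to[0,\infty)$ with $l(e)=0$, $l(g)=l(g^{-1})$, $l(gh)\le l(g)+l(h)$ and $l|_H=0$; its growth function is $\mathcal G_l(r)=\#\{Hx\in H\backslash G: l(x)\le r\}$, and $(G,H)$ has subexponential growth with respect to $l$ if $\mathcal G_l(r)<\infty$ for all $r$ and $\lim_{r\to\infty}\frac{\ln\mathcal G_l(r)}{r}=0$. *)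

(* Defs.v *)
From Stdlib Require Import Reals List.
From Coquelicot Require Import Coquelicot.
Open Scope R_scope.

Record group := Group {
  carrier :> Type;
  gmul : carrier -> carrier -> carrier;
  ginv : carrier -> carrier;
  gone : carrier;
  gmulA : forall x y z, gmul x (gmul y z) = gmul (gmul x y) z;
  gmul1l : forall x, gmul gone x = x;
  gmulVl : forall x, gmul (ginv x) x = gone
}.

Arguments gmul {g}. Arguments ginv {g}. Arguments gone {g}.

Definition is_subgroup (G : group) (H : G -> Prop) : Prop :=
  H gone /\ (forall x y, H x -> H y -> H (gmul x y)) /\ (forall x, H x -> H (ginv x)).

(* The subgroup H ∩ x H x^{-1} = { h | h ∈ H and x^{-1} h x ∈ H } *)
Definition conj_cap (G : group) (H : G -> Prop) (x : G) : G -> Prop :=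
  fun h => H h /\ H (gmul (ginv x) (gmul h x)).

(* [H : K] = n : there are exactly n left cosets of K in H, i.e. a family of n
   elements of H such that every h ∈ H lies in exactly one coset f_i K. *)
Definition has_index (G : group) (H K : G -> Prop) (n : nat) : Prop :=
  exists f : nat -> G,
    (forall i, (i < n)%nat -> H (f i)) /\
    (forall h, H h -> exists i, (i < n)%nat /\ K (gmul (ginv (f i)) h) /\
        forall j, (j < n)%nat -> K (gmul (ginv (f j)) h) -> j = i).

Definition L_is (G : group) (H : G -> Prop) (x : G) (n : nat) : Prop :=
  has_index G H (conj_cap G H x) n.

Definition R_is (G : group) (H : G -> Prop) (x : G) (n : nat) : Prop :=
  L_is G H (ginv x) n.

Definition hecke_pair (G : group) (H : G -> Prop) : Prop :=
  is_subgroup G H /\ forall x : G, exists n, L_is G H x n.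

Definition rel_unimodular (G : group) (H : G -> Prop) : Prop :=
  forall (g : G) (n m : nat), L_is G H g n -> R_is G H g m -> n = m.

Definition hatS (G : group) (S : list G) (y : G) : Prop :=
  In y S \/ (exists s, In s S /\ y = ginv s) \/ y = gone.

Definition word_prod (G : group) (w : list G) : G :=
  fold_right (fun a b => gmul a b) gone w.

(* S generates (G,H): H\G = ⋃_n H S^^n, i.e. every x lies in H (s_1 ... s_n), s_i ∈ S^ *)
Definition generates (G : group) (H : G -> Prop) (S : list G) : Prop :=
  forall x : G, exists (h : G) (w : list G),
    H h /\ (forall y, In y w -> hatS G S y) /\ x = gmul h (word_prod G w).

Definition length_function (G : group) (H : G -> Prop) (l : G -> R) : Prop :=
  l gone = 0 /\
  (forall g, 0 <= l g) /\
  (forall g, l g = l (ginv g)) /\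
  (forall g h, l (gmul g h) <= l g + l h) /\
  (forall h, H h -> l h = 0).

(* The set {Hx | P x} of right cosets has exactly n elements
   (Hx = Hy iff x y^{-1} ∈ H). *)
Definition coset_count (G : group) (H : G -> Prop) (P : G -> Prop) (n : nat) : Prop :=
  exists f : nat -> G,
    (forall i, (i < n)%nat -> P (f i)) /\
    (forall i j, (i < n)%nat -> (j < n)%nat -> H (gmul (f i) (ginv (f j))) -> i = j) /\
    (forall x, P x -> exists i, (i < n)%nat /\ H (gmul x (ginv (f i)))).

(* Subexponential growth w.r.t. l: the growth function
   G_l(r) = #{Hx : l(x) <= r} is finite for all r and ln G_l(r) / r -> 0. *)
Definition subexp_growth (G : group) (H : G -> Prop) (l : G -> R) : Prop :=
  exists growth : R -> nat,
    (forall r, coset_count G H (fun x => l x <= r) (growth r)) /\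
    is_lim (fun r => ln (INR (growth r)) / r) p_infty 0.

(* Main.v *)
Require Import Defs.
From Stdlib Require Import Reals List Lia Lra ClassicalEpsilon.
From Coquelicot Require Import Coquelicot.

Lemma mulA' (G : group) (x y z : G) : gmul (gmul x y) z = gmul x (gmul y z).
Proof. now rewrite gmulA. Qed.
Lemma mul1l (G : group) (x : G) : gmul gone x = x.
Proof. apply gmul1l. Qed.
Lemma mulVl (G : group) (x : G) : gmul (ginv x) x = gone.
Proof. apply gmulVl. Qed.
Lemma mulKl (G : group) (x y : G) : gmul (ginv x) (gmul x y) = y.
Proof. now rewrite gmulA, gmulVl, gmul1l. Qed.
Lemma mulVr (G : group) (x : G) : gmul x (ginv x) = gone.
Proof.
  rewrite <- (gmul1l G (gmul x (ginv x))).
  rewrite <- (gmulVl G (ginv x)) at 1.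
  rewrite mulA', (gmulA G (ginv x)), gmulVl, gmul1l, gmulVl. reflexivity.
Qed.
Lemma mul1r (G : group) (x : G) : gmul x gone = x.
Proof. rewrite <- (gmulVl G x), gmulA, mulVr, gmul1l. reflexivity. Qed.
Lemma invK (G : group) (x : G) : ginv (ginv x) = x.
Proof. rewrite <- (mul1r G (ginv (ginv x))), <- (gmulVl G x), gmulA, gmulVl, gmul1l. reflexivity. Qed.
Lemma mulKr (G : group) (x y : G) : gmul x (gmul (ginv x) y) = y.
Proof. now rewrite gmulA, mulVr, gmul1l. Qed.
Lemma inv_uniq (G : group) (x y : G) : gmul x y = gone -> ginv x = y.
Proof. intros E. rewrite <- (mul1r G (ginv x)), <- E, mulKl. reflexivity. Qed.
Lemma invM (G : group) (x y : G) : ginv (gmul x y) = gmul (ginv y) (ginv x).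
Proof. apply inv_uniq. rewrite mulA', (gmulA G y), mulVr, gmul1l, mulVr. reflexivity. Qed.
Lemma inv1 (G : group) : ginv (@gone G) = gone.
Proof. apply inv_uniq. apply gmul1l. Qed.

Ltac gsimpl := repeat (rewrite ?mulA', ?invM, ?invK, ?inv1, ?mul1l, ?mul1r, ?mulVl, ?mulVr, ?mulKl, ?mulKr).

Lemma pigeon (a b : nat) (Rel : nat -> nat -> Prop) :
  (forall x, (x < a)%nat -> exists y, (y < b)%nat /\ Rel x y) ->
  (forall x x' y, (x < a)%nat -> (x' < a)%nat -> (y < b)%nat -> Rel x y -> Rel x' y -> x = x') ->
  (a <= b)%nat.
Proof.
  intros Hex Hinj.
  set (f := fun x => epsilon (inhabits 0%nat) (fun y => (y < b)%nat /\ Rel x y)).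
  assert (Hf : forall x, (x < a)%nat -> (f x < b)%nat /\ Rel x (f x)).
  { intros x Hx. unfold f. apply (epsilon_spec (inhabits 0%nat) (fun y => (y < b)%nat /\ Rel x y)). auto. }
  assert (ND : NoDup (map f (seq 0 a))).
  { apply NoDup_map_NoDup_ForallPairs; [| apply seq_NoDup].
    intros x y Hx Hy E. apply in_seq in Hx, Hy.
    destruct (Hf x) as [H1 H2]; [lia|]. destruct (Hf y) as [H3 H4]; [lia|].
    rewrite E in H2. apply (Hinj x y (f y)); auto; lia. }
  assert (I : incl (map f (seq 0 a)) (seq 0 b)).
  { intros z Hz. apply in_map_iff in Hz. destruct Hz as [x [<- Hx]].
    apply in_seq in Hx. apply in_seq. destruct (Hf x); lia. }
  pose proof (NoDup_incl_length ND I) as L. rewrite length_map, !length_seq in L. exact L.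
Qed.

Lemma divuniq (t k t' k' n : nat) : (t*n+k = t'*n+k')%nat -> (k<n)%nat -> (k'<n)%nat -> t = t' /\ k = k'.
Proof.
  intros E Hk Hk'. destruct (Nat.lt_total t t') as [C|[C|C]].
  - exfalso. assert (t*n + n <= t'*n)%nat by nia. lia.
  - subst. lia.
  - exfalso. assert (t'*n + n <= t*n)%nat by nia. lia.
Qed.

Lemma key_count (G : group) (H : G -> Prop) (l : G -> R) (g : G) (n m Nr Nrc : nat) (r : R) :
  is_subgroup G H -> length_function G H l ->
  L_is G H g n -> R_is G H g m ->
  coset_count G H (fun x => l x <= r) Nr ->
  coset_count G H (fun x => l x <= r + l g) Nrc ->
  (Nr * m <= Nrc * n)%nat.
Proof.
  intros [H1 [HM HV]] [l1 [l0 [lV [lM lH]]]] [b [bH bU]] [a [aH aU]]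
    [fr [frP [frD frC]]] [fc [fcP [fcD fcC]]].
  set (h0 := fun i j t => gmul g (gmul (ginv (a j)) (gmul (fr i) (ginv (fc t))))).
  apply (pigeon _ _ (fun p q => exists i j t k, p = (i*m+j)%nat /\ (j<m)%nat /\ q = (t*n+k)%nat
     /\ (k<n)%nat /\ (i < Nr)%nat /\ (t < Nrc)%nat /\ H (h0 i j t) /\
     conj_cap G H g (gmul (ginv (b k)) (ginv (h0 i j t))))).
  - intros p Hp.
    assert (Hm : m <> 0%nat) by (intro; subst; lia).
    set (i := (p / m)%nat). set (j := (p mod m)%nat).
    assert (Ej : (j < m)%nat) by (apply Nat.mod_upper_bound; auto).
    assert (Ep : p = (i*m+j)%nat) by (pose proof (Nat.div_mod p m Hm); unfold i, j; lia).
    assert (Ei : (i < Nr)%nat) by nia.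
    assert (Ly : l (gmul g (gmul (ginv (a j)) (fr i))) <= r + l g).
    { pose proof (lM g (gmul (ginv (a j)) (fr i))). pose proof (lM (ginv (a j)) (fr i)).
      rewrite <- lV, (lH _ (aH j Ej)) in H2. pose proof (frP i Ei). simpl in H3. lra. }
    destruct (fcC _ Ly) as [t [Et Ht]].
    assert (Hh : H (h0 i j t)) by (unfold h0; gsimpl; rewrite !mulA' in Ht; exact Ht).
    destruct (bU (ginv (h0 i j t)) (HV _ Hh)) as [k [Ek [Ck _]]].
    exists (t*n+k)%nat. split; [nia|]. exists i, j, t, k. do 7 (split; [auto|]). exact Ck.
  - intros p p' q Hp Hp' Hq [i [j [t [k [E1 [E2 [E3 [E4 [E5 [E6 [E7 [E8 E9]]]]]]]]]]]]
      [i' [j' [t' [k' [F1 [F2 [F3 [F4 [F5 [F6 [F7 [F8 F9]]]]]]]]]]]].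
    subst p p'. rewrite F3 in E3. destruct (divuniq _ _ _ _ _ E3 F4 E4) as [<- <-].
    assert (Hii : H (gmul (fr i) (ginv (fr i')))).
    { pose proof (HM _ _ (HV _ E9) F9) as Z.
      pose proof (HM _ _ (HM _ _ (aH j E2) Z) (HV _ (aH j' F2))) as Z2.
      unfold h0 in Z2. gsimpl. rewrite ?mulA', ?invM, ?invK in Z2. repeat (rewrite ?mulA', ?invM, ?invK, ?inv1, ?mul1l, ?mul1r, ?mulVl, ?mulVr, ?mulKl, ?mulKr in Z2). exact Z2. }
    assert (Ei : i = i') by (apply frD; auto). subst i'.
    assert (Hjj : H (gmul g (gmul (gmul (ginv (a j)) (a j')) (ginv g)))).
    { pose proof (HM _ _ E7 (HV _ F7)) as Z. unfold h0 in Z. gsimpl. repeat (rewrite ?mulA', ?invM, ?invK, ?inv1, ?mul1l, ?mul1r, ?mulVl, ?mulVr, ?mulKl, ?mulKr in Z). exact Z. }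
    destruct (aU (a j') (aH j' F2)) as [idx [Hidx [_ Uidx]]].
    assert (j = idx).
    { apply Uidx; auto. split.
      - apply HM; [apply HV|]; apply aH; auto.
      - rewrite invK. rewrite !mulA' in Hjj. gsimpl. exact Hjj. }
    assert (j' = idx).
    { apply Uidx; auto. split.
      - rewrite mulVl. exact H1.
      - rewrite invK, mulVl, mul1l, mulVr. exact H1. }
    subst. reflexivity.
Qed.

Lemma ln_le' (x y : R) : 0 < x -> x <= y -> ln x <= ln y.
Proof. intros Hx [Hl|<-]; [left; apply ln_increasing; auto | right; reflexivity]. Qed.

Lemma R_le_L (G : group) (H : G -> Prop) (l : G -> R) (g : G) (n m : nat) :
  is_subgroup G H -> length_function G H l -> subexp_growth G H l ->
  L_is G H g n -> R_is G H g m -> (m <= n)%nat.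
Proof.
  intros HS Hl [N [HN Hlim]] HL HR.
  destruct (Nat.le_gt_cases m n) as [|Hlt]; [assumption|exfalso].
  assert (K : forall r, (N r * m <= N (r + l g)%R * n)%nat).
  { intros r. eapply key_count; eauto. }
  assert (N0 : (0 < N 0%R)%nat).
  { destruct (HN 0) as [f [_ [_ C]]]. destruct Hl as [l1 _].
    destruct (C gone) as [i [Hi _]]; [rewrite l1; lra | lia]. }
  destruct Hl as [l1 [l0 _]].
  assert (Hn : (0 < n)%nat).
  { destruct n; [|lia]. pose proof (K 0%R). nia. }
  destruct (l0 g) as [Hc|Hc].
  2:{ pose proof (K 0%R) as K0. rewrite <- Hc, Rplus_0_r in K0. nia. }
  set (c := l g) in *.
  set (q := INR m / INR n).
  assert (Hq : 1 < q).
  { unfold q. apply lt_INR in Hlt, Hn. simpl in Hn. apply Rlt_div_r; lra. }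
  assert (Pow : forall k, q ^ k <= INR (N (INR k * c))).
  { induction k.
    - simpl. rewrite Rmult_0_l. apply (le_INR 1). lia.
    - rewrite S_INR, Rmult_plus_distr_r, Rmult_1_l. simpl.
      pose proof (K (INR k * c)) as Kk. apply le_INR in Kk. rewrite !mult_INR in Kk.
      apply lt_INR in Hn. simpl in Hn.
      unfold q. unfold q in IHk.
      apply (Rmult_le_reg_r (INR n)); [lra|].
      replace (INR m / INR n * (INR m / INR n) ^ k * INR n) with ((INR m / INR n) ^ k * INR m) by (field; lra).
      eapply Rle_trans; [|exact Kk]. rewrite Rmult_comm, (Rmult_comm (INR (N _))).
      apply Rmult_le_compat_l; [apply pos_INR|exact IHk]. }
  set (eps := ln q / c).
  assert (Heps : 0 < eps).
  { unfold eps. apply Rdiv_lt_0_compat; auto. rewrite <- ln_1. apply ln_increasing; lra. }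
  apply is_lim_spec in Hlim. destruct (Hlim (mkposreal eps Heps)) as [M HM]. simpl in HM.
  destruct (INR_archimed c (Rmax M 0) Hc) as [k Hk].
  assert (Hk1 : INR k * c > M) by (pose proof (Rmax_l M 0); lra).
  assert (Hk0 : 0 < INR k * c) by (pose proof (Rmax_r M 0); lra).
  assert (Hkk : 0 < INR k) by (apply (Rmult_lt_reg_r c); lra).
  specialize (HM (INR k * c) Hk1).
  assert (Lb : INR k * ln q <= ln (INR (N (INR k * c)))).
  { rewrite <- ln_pow by lra. apply ln_le'; [apply pow_lt; lra| apply Pow]. }
  assert (Ge : eps <= ln (INR (N (INR k * c))) / (INR k * c)).
  { unfold eps. apply (Rmult_le_reg_r (INR k * c)); [lra|].
    replace (ln (INR (N (INR k * c))) / (INR k * c) * (INR k * c)) with (ln (INR (N (INR k*c)))) by (field; lra).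
    replace (ln q / c * (INR k * c)) with (INR k * ln q) by (field; lra). lra. }
  rewrite Rminus_0_r in HM. apply Rabs_def2 in HM. lra.
Qed.

Theorem proposition4p6 (G : group) (H : G -> Prop) (S : list G) (l : G -> R) :
  hecke_pair G H ->
  generates G H S ->
  length_function G H l ->
  subexp_growth G H l ->
  rel_unimodular G H.
Proof.
  intros [HS _] _ Hl Hg g n m HL HR.
  apply Nat.le_antisymm.
  - apply (R_le_L G H l (ginv g) m n HS Hl Hg HR). unfold R_is. rewrite invK. exact HL.
  - apply (R_le_L G H l g n m HS Hl Hg HL HR).
Qed.
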